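(* Let $A_0\subseteq V'$ be feasible for (GDSP) with $\mathrm{assoc}_S(A_0)>0$. Let $$\theta=\min\{\mathrm{pen}(A):\emptyset\neq A\subseteq V',\ A \text{ infeasible for (GDSP)}\}$$ (if no infeasible nonempty set exists, the condition on $\gamma$ below is void). Let $$\gamma>\frac{\mathrm{vol}_d(V)}{\theta}\cdot\frac{\mathrm{vol}_g(A_0)+\nu_S}{\mathrm{assoc}_S(A_0)}.$$ Consider the unconstrained problem $$\min_{\emptyset\neq A\subseteq V'} U(A),\qquad U(A):=\frac{\mathrm{vol}_g(A)+\nu_S\,\mathrm{unit}(A)+\gamma\,\mathrm{pen}(A)}{\mathrm{assoc}_S(A)},$$ with the convention $x/0=+\infty$ for $x>0$. Then: - Every minimizer of $U$ is feasible for (GDSP) and is an optimal solution of (GDSP). - Every optimal solution of (GDSP) is a minimizer of $U$. - The minimum value of $U$ equals the reciprocal of the optimal value of (GDSP).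
   Context: Let $V$ be a finite vertex set with symmetric nonnegative weights $w_{ij}=w_{ji}\ge0$ and $w_{ii}=0$. - $d_i=\sum_{j\in V}w_{ij}$, and $\mathrm{vol}_h(A)=\sum_{i\in A}h_i$ for $h:V\to\mathbb{R}$. - $\mathrm{assoc}(A)=\sum_{i,j\in A}w_{ij}$ (ordered pairs), and $\mathrm{cut}(A,B)=\sum_{i\in A,j\in B}w_{ij}$. - Fix $S\subseteq V$, $V'=V\setminus S$, and $d^S_i=\sum_{j\in S}w_{ij}$. - $g:V\to(0,\infty)$, $\mu_S=\mathrm{assoc}(S)$, $\nu_S=\mathrm{vol}_g(S)$. - $\mathrm{unit}(A)=1$ if $A\ne\emptyset$ and $0$ otherwise. - For $A\subseteq V'$: $\mathrm{assoc}_S(A)=\mathrm{vol}_d(A)-\mathrm{cut}(A,V'\setminus A)+\mathrm{vol}_{d^S}(A)+\mu_S\,\mathrm{unit}(A)$. Constraint data: - Vectors $M_1,\dots,M_p\in[0,\infty)^V$ and reals $k_j,l_j$ for $j=1,\dots,p$. - A symmetric function $\mathrm{dist}:V\times V\to[0,\infty)$ with $\mathrm{dist}(u,u)=0$, and a threshold $d_0\ge0$. - A set $A\subseteq V'$ is feasible for (GDSP) if $A\neq\emptyset$, $k_j\le \mathrm{vol}_{M_j}(A)\le l_j$ for all $j$, and $\mathrm{dist}(u,v)\le d_0$ for all $u,v\in A$. - (GDSP) is the problem of maximizing $\dfrac{\mathrm{assoc}_S(A)}{\mathrm{vol}_g(A)+\nu_S}$ over feasible $A$. Penalty: $\mathrm{pen}(\emptyset)=0$,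 and for $A\ne\emptyset$, $$\mathrm{pen}(A)=\sum_{j=1}^p\max\{0,\mathrm{vol}_{M_j}(A)-l_j\}+\sum_{j=1}^p\max\{0,k_j-\mathrm{vol}_{M_j}(A)\}+\sum_{u,v\in A}\max\{0,\mathrm{dist}(u,v)-d_0\}.$$ *)

(* Defs.v *)
(* R is an arbitrary real field (the statement is purely
   algebraic/order-theoretic). *)
From HB Require Import structures.
From mathcomp Require Import all_boot all_order all_algebra.
Set Implicit Arguments. Unset Strict Implicit. Unset Printing Implicit Defensive.
Import Order.TTheory GRing.Theory Num.Theory.
Local Open Scope ring_scope.

Section GDSP.
Variables (R : realFieldType) (V : finType).

Definition deg (w : V -> V -> R) (i : V) : R := \sum_(j : V) w i j.
Definition vol (h : V -> R) (A : {set V}) : R := \sum_(i in A) h i.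
Definition assoc (w : V -> V -> R) (A : {set V}) : R :=
  \sum_(i in A) \sum_(j in A) w i j.
Definition cut (w : V -> V -> R) (A B : {set V}) : R :=
  \sum_(i in A) \sum_(j in B) w i j.
Definition degS (w : V -> V -> R) (S : {set V}) (i : V) : R :=
  \sum_(j in S) w i j.
Definition unitset (A : {set V}) : R := if A == set0 then 0 else 1.

(* assoc_S(A) for A ⊆ V' = V \ S *)
Definition assocS (w : V -> V -> R) (S A : {set V}) : R :=
  vol (deg w) A - cut w A (~: S :\: A) + vol (degS w S) A
  + assoc w S * unitset A.

Definition feasible (p : nat) (M : 'I_p -> V -> R) (k l : 'I_p -> R)
  (dist : V -> V -> R) (d0 : R) (S A : {set V}) : Prop :=
  [/\ A \subset ~: S, A != set0,
      (forall j, k j <= vol (M j) A <= l j)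
    & (forall u v, u \in A -> v \in A -> dist u v <= d0)].

Definition gdsp_obj (w : V -> V -> R) (g : V -> R) (S A : {set V}) : R :=
  assocS w S A / (vol g A + vol g S).

Definition gdsp_optimal (p : nat) (M : 'I_p -> V -> R) (k l : 'I_p -> R)
  (dist : V -> V -> R) (d0 : R) (w : V -> V -> R) (g : V -> R)
  (S A : {set V}) : Prop :=
  feasible M k l dist d0 S A /\
  (forall B : {set V}, feasible M k l dist d0 S B -> gdsp_obj w g S B <= gdsp_obj w g S A).

Definition pen (p : nat) (M : 'I_p -> V -> R) (k l : 'I_p -> R)
  (dist : V -> V -> R) (d0 : R) (A : {set V}) : R :=
  if A == set0 then 0 else
  \sum_(j < p) Num.max 0 (vol (M j) A - l j)
  + \sum_(j < p) Num.max 0 (k j - vol (M j) A)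
  + \sum_(u in A) \sum_(v in A) Num.max 0 (dist u v - d0).

(* U(A) as an extended real: None stands for +infinity (the convention
   x/0 = +oo; the numerator is > 0 for nonempty A). *)
Definition Uval (p : nat) (M : 'I_p -> V -> R) (k l : 'I_p -> R)
  (dist : V -> V -> R) (d0 : R) (w : V -> V -> R) (g : V -> R) (gamma : R)
  (S A : {set V}) : option R :=
  if assocS w S A == 0 then None
  else Some ((vol g A + vol g S * unitset A + gamma * pen M k l dist d0 A)
             / assocS w S A).

Definition ext_le (x y : option R) : bool :=
  match x, y with
  | _, None => true
  | None, Some _ => false
  | Some a, Some b => a <= b
  end.

Definition U_minimizer (p : nat) (M : 'I_p -> V -> R) (k l : 'I_p -> R)
  (dist : V -> V -> R) (d0 : R) (w : V -> V -> R) (g : V -> R) (gamma : R)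
  (S A : {set V}) : Prop :=
  [/\ A \subset ~: S, A != set0 &
      forall B : {set V}, B \subset ~: S -> B != set0 ->
        ext_le (Uval M k l dist d0 w g gamma S A) (Uval M k l dist d0 w g gamma S B)].

Definition is_theta (p : nat) (M : 'I_p -> V -> R) (k l : 'I_p -> R)
  (dist : V -> V -> R) (d0 : R) (S : {set V}) (theta : R) : Prop :=
  (exists A : {set V}, [/\ A \subset ~: S, A != set0, ~ feasible M k l dist d0 S A
                & pen M k l dist d0 A = theta]) /\
  (forall A : {set V}, A \subset ~: S -> A != set0 -> ~ feasible M k l dist d0 S A ->
     theta <= pen M k l dist d0 A).

End GDSP.

(* Main.v *)
Require Import Defs.
From HB Require Import structures.
From mathcomp Require Import all_boot all_order all_algebra lra.
Import Order.TTheory GRing.Theory Num.Theory.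
Local Open Scope ring_scope.

Section Aux.
Variables (R : realFieldType).

Lemma sum_sub_leT (I : finType) (X : {pred I}) (F : I -> R) :
  (forall i, 0 <= F i) -> \sum_(i in X) F i <= \sum_(i in [set: I]) F i.
Proof.
move=> F0; rewrite [X in _ <= X](bigID (mem X)) /=.
have -> : \sum_(i in [set: I] | i \in X) F i = \sum_(i in X) F i.
  by apply: eq_bigl => i; rewrite in_setT.
by rewrite lerDl; apply: sumr_ge0 => i _; exact: F0.
Qed.

Lemma sum_sub_le (I : finType) (X : {pred I}) (F : I -> R) :
  (forall i, 0 <= F i) -> \sum_(i in X) F i <= \sum_i F i.
Proof.
move=> F0; rewrite [X in _ <= X](bigID (mem X)) /= lerDl.
by apply: sumr_ge0 => i _; exact: F0.
Qed.

Lemma sum_sub_leP (I : finType) (P : pred I) (F : I -> R) :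
  (forall i, 0 <= F i) -> \sum_(i | P i) F i <= \sum_i F i.
Proof.
move=> F0; rewrite [X in _ <= X](bigID P) /= lerDl.
by apply: sumr_ge0 => i _; exact: F0.
Qed.

Lemma le_sum1 (I : finType) (X : {pred I}) (F : I -> R) x :
  x \in X -> (forall i, 0 <= F i) -> F x <= \sum_(i in X) F i.
Proof.
move=> xX F0; rewrite (bigD1 x) //= lerDl.
by apply: sumr_ge0 => i _; exact: F0.
Qed.

Lemma le_sum1T (I : finType) (F : I -> R) x :
  (forall i, 0 <= F i) -> F x <= \sum_i F i.
Proof.
move=> F0; rewrite (bigD1 x) //= lerDl.
by apply: sumr_ge0 => i _; exact: F0.
Qed.

Variable (V : finType).

Lemma unitset_ge0 (A : {set V}) : 0 <= unitset R A.
Proof. by rewrite /unitset; case: ifP. Qed.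

Lemma assoc_ge0 (w : V -> V -> R) (A : {set V}) :
  (forall i j, 0 <= w i j) -> 0 <= assoc w A.
Proof. by move=> w0; do 2!(apply: sumr_ge0 => ? _). Qed.

Lemma assocS_ge0 (w : V -> V -> R) (S A : {set V}) :
  (forall i j, 0 <= w i j) -> 0 <= assocS w S A.
Proof.
move=> w0; rewrite /assocS /vol /cut -sumrB.
apply: addr_ge0; [apply: addr_ge0|].
- apply: sumr_ge0 => i _; rewrite subr_ge0 /deg; exact: sum_sub_le.
- by apply: sumr_ge0 => i _; apply: sumr_ge0.
- by apply: mulr_ge0; [exact: assoc_ge0|exact: unitset_ge0].
Qed.

Lemma assocS_le (w : V -> V -> R) (S A : {set V}) :
  (forall i j, 0 <= w i j) -> (forall i j, w i j = w j i) ->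
  A \subset ~: S -> assocS w S A <= vol (deg w) [set: V].
Proof.
move=> w0 ws AS.
have dAS : [disjoint A & S] by rewrite disjoints_subset.
apply: (@le_trans _ _ (vol (deg w) A + vol (degS w S) A + assoc w S)).
  rewrite /assocS; apply: lerD; first apply: lerD => //.
  - rewrite lerBlDr lerDl /cut; apply: sumr_ge0 => i _; exact: sumr_ge0.
  - rewrite /unitset; case: ifP => _; rewrite ?mulr0 ?mulr1 //; exact: assoc_ge0.
have -> : vol (degS w S) A = \sum_(i in S) \sum_(j in A) w i j.
  rewrite /vol /degS exchange_big; apply: eq_bigr => i _.
  by apply: eq_bigr => j _.
rewrite -addrA /assoc -big_split /=.
apply: (@le_trans _ _ (vol (deg w) A + vol (deg w) S)).
  apply: lerD => //; apply: ler_sum => i _.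
  rewrite -bigU //= /deg; by apply: sum_sub_leP.
rewrite /vol -bigU //=.
have -> : \sum_(i in [set: V]) deg w i = \sum_i deg w i.
  by apply: eq_bigl => i; rewrite in_setT.
by apply: sum_sub_leP => i; apply: sumr_ge0.
Qed.

Variables (p : nat) (M : 'I_p -> V -> R) (k l : 'I_p -> R)
  (dist : V -> V -> R) (d0 : R) (S : {set V}).

Definition feasb (A : {set V}) : bool :=
  [&& A \subset ~: S, A != set0,
      [forall j, k j <= vol (M j) A <= l j] &
      [forall u, forall v, (u \in A) ==> (v \in A) ==> (dist u v <= d0)]].

Lemma feasbP (A : {set V}) : reflect (feasible M k l dist d0 S A) (feasb A).
Proof.
apply: (iffP and4P) => [[H1 H2 /forallP H3 H4]|[H1 H2 H3 H4]]; split => //.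
- move=> u v uA vA; move/forallP: H4 => /(_ u) /forallP /(_ v).
  by rewrite uA vA.
- by apply/forallP => j; exact: H3.
- apply/forallP => u; apply/forallP => v; apply/implyP => uA; apply/implyP => vA.
  exact: H4.
Qed.

Lemma max0_ge0 (x : R) : 0 <= Num.max 0 x.
Proof. by rewrite le_max lexx. Qed.

Lemma pen_ge0 (A : {set V}) : 0 <= pen M k l dist d0 A.
Proof.
rewrite /pen; case: ifP => // _.
apply: addr_ge0; first apply: addr_ge0.
- by apply: sumr_ge0 => j _; exact: max0_ge0.
- by apply: sumr_ge0 => j _; exact: max0_ge0.
- by apply: sumr_ge0 => u _; apply: sumr_ge0 => v _; exact: max0_ge0.
Qed.

Lemma pen_feas (A : {set V}) : feasible M k l dist d0 S A -> pen M k l dist d0 A = 0.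
Proof.
case=> _ An0 H3 H4; rewrite /pen (negbTE An0).
have -> : \sum_(j < p) Num.max 0 (vol (M j) A - l j) = 0.
  by rewrite big1 // => j _; apply: max_l; rewrite subr_le0; case/andP: (H3 j).
have -> : \sum_(j < p) Num.max 0 (k j - vol (M j) A) = 0.
  by rewrite big1 // => j _; apply: max_l; rewrite subr_le0; case/andP: (H3 j).
rewrite !add0r big1 // => u uA; rewrite big1 // => v vA.
by apply: max_l; rewrite subr_le0; exact: H4.
Qed.

Lemma pen_pos (A : {set V}) : A \subset ~: S -> A != set0 -> ~ feasible M k l dist d0 S A ->
  0 < pen M k l dist d0 A.
Proof.
move=> AS An0 Hnf; rewrite ltNge; apply/negP => Hle; apply: Hnf.
move: Hle; rewrite /pen (negbTE An0).
set s1 := \sum_(j < p) _; set s2 := \sum_(j < p) _; set s3 := \sum_(u in A) _ => Hle.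
have s1g : 0 <= s1 by apply: sumr_ge0 => j _; exact: max0_ge0.
have s2g : 0 <= s2 by apply: sumr_ge0 => j _; exact: max0_ge0.
have s3g : 0 <= s3.
  by apply: sumr_ge0 => u _; apply: sumr_ge0 => v _; exact: max0_ge0.
have s1l : s1 <= 0 by lra.
have s2l : s2 <= 0 by lra.
have s3l : s3 <= 0 by lra.
split => //.
- move=> j; apply/andP; split.
  + have := le_trans (le_sum1T _ (fun j => Num.max 0 (k j - vol (M j) A)) j
      (fun j => max0_ge0 _)) s2l.
    by rewrite ge_max subr_le0 => /andP[].
  + have := le_trans (le_sum1T _ (fun j => Num.max 0 (vol (M j) A - l j)) j
      (fun j => max0_ge0 _)) s1l.
    by rewrite ge_max subr_le0 => /andP[].
- move=> u v uA vA.
  have h1 := le_sum1 _ _ (fun v => Num.max 0 (dist u v - d0)) v vA (fun v => max0_ge0 _).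
  have h2 := le_sum1 _ _ (fun u => \sum_(v in A) Num.max 0 (dist u v - d0)) u uA
    (fun u => sumr_ge0 _ (fun v _ => max0_ge0 _)).
  have := le_trans h1 (le_trans h2 s3l).
  by rewrite ge_max subr_le0 => /andP[].
Qed.

End Aux.
Arguments pen_feas {R V p M k l dist d0 S A}.
Arguments pen_pos {R V p M k l dist d0 S A}.
Arguments assocS_le {R V w S A}.
Arguments assocS_ge0 {R V w S A}.
Arguments feasbP {R V p M k l dist d0 S A}.
Arguments pen_ge0 {R V p M k l dist d0 A}.
Arguments feasb {R V p}.

Theorem theorem1 (R : realFieldType) (V : finType)
  (w : V -> V -> R)
  (w_sym : forall i j, w i j = w j i)
  (w_nneg : forall i j, 0 <= w i j)
  (w_diag : forall i, w i i = 0)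
  (S : {set V}) (g : V -> R) (g_pos : forall i, 0 < g i)
  (p : nat) (M : 'I_p -> V -> R) (M_nneg : forall j i, 0 <= M j i)
  (k l : 'I_p -> R)
  (dist : V -> V -> R)
  (dist_sym : forall u v, dist u v = dist v u)
  (dist_nneg : forall u v, 0 <= dist u v)
  (dist_diag : forall u, dist u u = 0)
  (d0 : R) (d0_nneg : 0 <= d0)
  (A0 : {set V})
  (A0_feas : feasible M k l dist d0 S A0)
  (A0_pos : 0 < assocS w S A0)
  (gamma : R)
  (h_gamma : forall theta, is_theta M k l dist d0 S theta ->
     vol (deg w) [set: V] / theta * ((vol g A0 + vol g S) / assocS w S A0)
       < gamma) :
  (exists A, U_minimizer M k l dist d0 w g gamma S A) /\
  (forall A : {set V}, U_minimizer M k l dist d0 w g gamma S A ->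
     feasible M k l dist d0 S A /\ gdsp_optimal M k l dist d0 w g S A) /\
  (forall A : {set V}, gdsp_optimal M k l dist d0 w g S A ->
     U_minimizer M k l dist d0 w g gamma S A) /\
  (forall A B, U_minimizer M k l dist d0 w g gamma S A ->
     gdsp_optimal M k l dist d0 w g S B ->
     Uval M k l dist d0 w g gamma S A = Some (gdsp_obj w g S B)^-1).
Proof.
set F := gdsp_obj w g S.
set D := vol (deg w) [set: V].
have feasP := fun A => @feasbP R V p M k l dist d0 S A.
have A0b : feasb M k l dist d0 S A0 by apply/feasP.
have [Bs [Bsf Bsmax]] : exists Bs, feasible M k l dist d0 S Bs /\
    forall B, feasible M k l dist d0 S B -> F B <= F Bs.
  exists [arg max_(B > A0 | feasb M k l dist d0 S B) F B]%O.
  case: (arg_maxP F A0b) => B' /feasP HB' Hmax; split => // B /feasP.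
  exact: Hmax.
set c := F Bs.
have den_pos : forall A : {set V}, A != set0 -> 0 < vol g A + vol g S.
  move=> A /set0Pn [x xA].
  have h1 : g x <= vol g A by rewrite /vol; apply: le_sum1 => // i; exact: ltW.
  have h2 : 0 <= vol g S by apply: sumr_ge0 => i _; exact: ltW.
  have := g_pos x; lra.
case: (A0_feas) => A0S A0n0 _ _.
have FA0 : 0 < F A0 by apply: divr_gt0 => //; exact: den_pos.
have FA0c : F A0 <= c := Bsmax A0 A0_feas.
have cpos : 0 < c := lt_le_trans FA0 FA0c.
have Dpos : 0 < D := lt_le_trans A0_pos (assocS_le w_nneg w_sym A0S).
have Ufeas : forall A : {set V}, feasible M k l dist d0 S A -> assocS w S A != 0 ->
    Uval M k l dist d0 w g gamma S A = Some (F A)^-1.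
  move=> A HA Hn; rewrite /Uval (negbTE Hn) (pen_feas HA) mulr0 addr0 /unitset.
  case: HA => _ An0 _ _; rewrite (negbTE An0) mulr1 /F /gdsp_obj invf_div //.
have Uinf : forall A : {set V}, A \subset ~: S -> A != set0 -> ~ feasible M k l dist d0 S A ->
    assocS w S A != 0 ->
    exists2 u, Uval M k l dist d0 w g gamma S A = Some u & c^-1 < u.
  move=> A AS An0 Hnf Hn.
  pose Th (B : {set V}) := [&& B \subset ~: S, B != set0 & ~~ feasb M k l dist d0 S B].
  have ThA : Th A by rewrite /Th AS An0 /=; apply/negP => /feasP.
  have [B1 [thB thmin]] : exists B1, Th B1 /\
      forall B : {set V}, Th B -> pen M k l dist d0 B1 <= pen M k l dist d0 B.
    exists [arg min_(B < A | Th B) pen M k l dist d0 B]%O.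
    by case: (arg_minP (pen M k l dist d0) ThA) => B' HB' Hmin; split.
  set th := pen M k l dist d0 B1.
  case/and3P: thB => B1S B1n0 B1nf.
  have B1nf' : ~ feasible M k l dist d0 S B1 by move=> /feasP; apply/negP.
  have isth : is_theta M k l dist d0 S th.
    split; first by exists B1.
    move=> A' A'S A'n0 A'nf; apply: thmin.
    by rewrite /Th A'S A'n0 /=; apply/negP => /feasP.
  have thpos : 0 < th := pen_pos B1S B1n0 B1nf'.
  have thA : th <= pen M k l dist d0 A := thmin A ThA.
  have hg := h_gamma th isth.
  rewrite -(invf_div (assocS w S A0) (vol g A0 + vol g S)) -/(F A0) in hg.
  rewrite mulrAC ltr_pdivrMr // in hg.
  have apos : 0 < assocS w S A by rewrite lt_def Hn assocS_ge0.
  have aleD : assocS w S A <= D := assocS_le w_nneg w_sym AS.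
  set x := (F A0)^-1 in hg.
  have xpos : 0 < x by rewrite invr_gt0.
  have gpos : 0 < gamma.
    have : 0 < gamma * th by apply: lt_trans hg; exact: mulr_gt0.
    by rewrite pmulr_lgt0.
  exists ((vol g A + vol g S * unitset R A + gamma * pen M k l dist d0 A) / assocS w S A).
    by rewrite /Uval (negbTE Hn).
  have h1 : c^-1 <= x by rewrite /x lef_pV2 ?posrE.
  have h2 : x < gamma * th / D by rewrite ltr_pdivlMr // mulrC.
  have h3 : gamma * th / D <= gamma * th / assocS w S A.
    apply: ler_wpM2l; first by apply: ltW; exact: mulr_gt0.
    by rewrite lef_pV2 ?posrE.
  have h4 : gamma * th / assocS w S A <=
      (vol g A + vol g S * unitset R A + gamma * pen M k l dist d0 A) / assocS w S A.
    rewrite ler_pM2r ?invr_gt0 //.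
    have e1 : 0 <= vol g A by apply: sumr_ge0 => i _; exact: ltW.
    have e2 : 0 <= vol g S * unitset R A.
      apply: mulr_ge0; last exact: unitset_ge0.
      by apply: sumr_ge0 => i _; exact: ltW.
    have e3 : gamma * th <= gamma * pen M k l dist d0 A by apply: ler_wpM2l => //; exact: ltW.
    lra.
  exact: le_lt_trans h1 (lt_le_trans h2 (le_trans h3 h4)).
have claim : forall A : {set V}, A \subset ~: S -> A != set0 ->
    ext_le (Some c^-1) (Uval M k l dist d0 w g gamma S A).
  move=> A AS An0.
  case: (eqVneq (assocS w S A) 0) => Hn; first by rewrite /Uval Hn eqxx.
  case: (feasP A) => HA.
    rewrite Ufeas //= lef_pV2 ?posrE //; first exact: Bsmax.
    apply: divr_gt0; last exact: den_pos.
    by rewrite lt_def Hn assocS_ge0.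
  have [u -> hu] := Uinf A AS An0 HA Hn; exact: ltW.
have optc : forall A : {set V}, gdsp_optimal M k l dist d0 w g S A -> F A = c.
  move=> A [HA Hmax]; apply: le_anti; rewrite Bsmax //=; exact: Hmax.
have Uopt1 : forall A : {set V}, gdsp_optimal M k l dist d0 w g S A ->
    Uval M k l dist d0 w g gamma S A = Some c^-1.
  move=> A HAo; have e := optc A HAo; case: HAo => HA _.
  have Hn : assocS w S A != 0.
    apply/eqP => H0; move: e; rewrite /F /gdsp_obj H0 mul0r => e.
    by move: cpos; rewrite -e ltxx.
  by rewrite Ufeas // e.
have Uopt2 : forall A : {set V}, A \subset ~: S -> A != set0 ->
    Uval M k l dist d0 w g gamma S A = Some c^-1 -> gdsp_optimal M k l dist d0 w g S A.
  move=> A AS An0 HU.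
  case: (eqVneq (assocS w S A) 0) => Hn; first by move: HU; rewrite /Uval Hn eqxx.
  case: (feasP A) => HA.
    move: HU; rewrite Ufeas // => -[] /invr_inj e.
    by split => // B HB; rewrite -/(F A) -/(F B) e; exact: Bsmax.
  have [u e hu] := Uinf A AS An0 HA Hn.
  by move: HU hu; rewrite e => -[] ->; rewrite ltxx.
have Bsopt : gdsp_optimal M k l dist d0 w g S Bs by split.
have minU : forall A : {set V}, U_minimizer M k l dist d0 w g gamma S A ->
    Uval M k l dist d0 w g gamma S A = Some c^-1.
  move=> A [AS An0 Hmin].
  case: (Bsf) => BsS Bsn0 _ _.
  have := Hmin Bs BsS Bsn0; rewrite (Uopt1 Bs Bsopt).
  have := claim A AS An0.
  case: (Uval M k l dist d0 w g gamma S A) => [u|] //= h1 h2.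
  by rewrite (@le_anti _ _ u c^-1) // h1 h2.
have optmin : forall A : {set V}, gdsp_optimal M k l dist d0 w g S A ->
    U_minimizer M k l dist d0 w g gamma S A.
  move=> A HAo; have HU := Uopt1 A HAo; case: HAo => -[AS An0 _ _] _.
  by split => // B BS Bn0; rewrite HU; exact: claim.
split; first by exists Bs; exact: optmin.
split.
  move=> A HAm; have HU := minU A HAm; case: HAm => AS An0 _.
  have Ho := Uopt2 A AS An0 HU; split => //; by case: Ho.
split; first exact: optmin.
by move=> A B HAm HBo; rewrite (minU A HAm) (optc B HBo).
Qed.
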